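(* Let $A$ be a left skew brace and $I$ an ideal of $A$. Then there is a largest ideal of $A$ that centralizes $I$ (the centralizer of $I$); i.e. the set of ideals $J$ of $A$ with $[I,J]=0$ has a greatest element with respect to inclusion.
   Context: A (left) skew brace is a triple $(A,*,\circ)$ with $(A,* )$ and $(A,\circ)$ groups with common identity $1$ such that $a\circ(b*c)=(a\circ b)*a^{-*}*(a\circ c)$ for all $a,b,c\in A$ ($a^{-*}$ the $*$-inverse). Morphisms are maps that are homomorphisms for both operations; products are componentwise. For $a,u\in A$, $\lambda_a(u)=a^{-*}*(a\circ u)$. An ideal of $A$ is a subset $I$ that is a normal subgroup of $(A,\circ)$, satisfies $I*a=a*I$ for all $a\in A$, and $\lambda_a(I)\subseteq I$ for all $a\in A$. An ideal $J$ centralizes $I$, written $[I,J]=0$, if there is a skew brace morphism $\varphi\colon I\times J\to A$ with $\varphi(i,1)=i$ and $\varphi(1,j)=j$ for all $i\in I$, $j\in J$. *)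

(* Defs.v *)
Definition is_group {T : Type} (op : T -> T -> T) (e : T) (inv : T -> T) : Prop :=
  (forall x y z, op x (op y z) = op (op x y) z) /\
  (forall x, op e x = x) /\ (forall x, op x e = x) /\
  (forall x, op (inv x) x = e) /\ (forall x, op x (inv x) = e).

Record skew_brace := SkewBrace {
  sb_car :> Type;
  sb_add : sb_car -> sb_car -> sb_car;
  sb_circ : sb_car -> sb_car -> sb_car;
  sb_one : sb_car;
  sb_addinv : sb_car -> sb_car;
  sb_circinv : sb_car -> sb_car;
  sb_add_group : is_group sb_add sb_one sb_addinv;
  sb_circ_group : is_group sb_circ sb_one sb_circinv;
  sb_compat : forall a b c,
    sb_circ a (sb_add b c) =
    sb_add (sb_add (sb_circ a b) (sb_addinv a)) (sb_circ a c)
}.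

Arguments sb_add {s}.
Arguments sb_circ {s}.
Arguments sb_one {s}.
Arguments sb_addinv {s}.
Arguments sb_circinv {s}.

Definition lambda {A : skew_brace} (a u : A) : A := sb_add (sb_addinv a) (sb_circ a u).

Definition subset {A : skew_brace} (I J : A -> Prop) : Prop := forall x, I x -> J x.

Definition circ_normal_subgroup {A : skew_brace} (I : A -> Prop) : Prop :=
  I sb_one /\
  (forall x y, I x -> I y -> I (sb_circ x y)) /\
  (forall x, I x -> I (sb_circinv x)) /\
  (forall a x, I x -> I (sb_circ (sb_circ a x) (sb_circinv a))).

Definition ideal {A : skew_brace} (I : A -> Prop) : Prop :=
  circ_normal_subgroup I /\
  (forall a : A,
     (forall i, I i -> exists i', I i' /\ sb_add i a = sb_add a i') /\
     (forall i, I i -> exists i', I i' /\ sb_add a i = sb_add i' a)) /\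
  (forall (a u : A), I u -> I (lambda a u)).

(* [I, J] = 0: there is a skew brace morphism phi : I x J -> A with
   phi(i,1) = i and phi(1,j) = j.  The skew brace I x J carries the
   componentwise operations; phi is represented as a function of two
   arguments, only its values on I x J matter. *)
Definition centralizes {A : skew_brace} (I J : A -> Prop) : Prop :=
  exists phi : A -> A -> A,
    (forall i i' j j', I i -> I i' -> J j -> J j' ->
       phi (sb_add i i') (sb_add j j') = sb_add (phi i j) (phi i' j')) /\
    (forall i i' j j', I i -> I i' -> J j -> J j' ->
       phi (sb_circ i i') (sb_circ j j') = sb_circ (phi i j) (phi i' j')) /\
    (forall i, I i -> phi i sb_one = i) /\
    (forall j, J j -> phi sb_one j = j).

(* Main.v *)
Require Import Defs.

Section G.
Context {T : Type} (op : T -> T -> T) (e : T) (inv : T -> T) (H : is_group op e inv).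
Lemma g_A x y z : op x (op y z) = op (op x y) z. Proof. apply H. Qed.
Lemma g_idl x : op e x = x. Proof. apply H. Qed.
Lemma g_idr x : op x e = x. Proof. apply H. Qed.
Lemma g_invl x : op (inv x) x = e. Proof. apply H. Qed.
Lemma g_invr x : op x (inv x) = e. Proof. apply H. Qed.
Lemma g_Kl a x : op (inv a) (op a x) = x.
Proof. rewrite g_A, g_invl, g_idl; reflexivity. Qed.
Lemma g_Kr a x : op a (op (inv a) x) = x.
Proof. rewrite g_A, g_invr, g_idl; reflexivity. Qed.
Lemma g_Kl' a x : op (op x a) (inv a) = x.
Proof. rewrite <- g_A, g_invr, g_idr; reflexivity. Qed.
Lemma g_Kr' a x : op (op x (inv a)) a = x.
Proof. rewrite <- g_A, g_invl, g_idr; reflexivity. Qed.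
Lemma g_cancl a x y : op a x = op a y -> x = y.
Proof. intro h. rewrite <- (g_Kl a x), h, g_Kl; reflexivity. Qed.
Lemma g_inv_uniq a b : op a b = e -> b = inv a.
Proof. intro h. apply (g_cancl a). rewrite h, g_invr; reflexivity. Qed.
Lemma g_invK a : inv (inv a) = a.
Proof. symmetry. apply g_inv_uniq. apply g_invl. Qed.
Lemma g_inv_op a b : inv (op a b) = op (inv b) (inv a).
Proof. symmetry. apply g_inv_uniq. rewrite g_A, <- (g_A a b), g_invr, g_idr, g_invr. reflexivity. Qed.
Lemma g_inv_e : inv e = e.
Proof. symmetry. apply g_inv_uniq. apply g_idl. Qed.
End G.

Section B.
Variable A : skew_brace.
Local Notation "x ⊕ y" := (@sb_add A x y) (at level 50, left associativity).
Local Notation "x ⊚ y" := (@sb_circ A x y) (at level 40, left associativity).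
Local Notation ai := (@sb_addinv A).
Local Notation ci := (@sb_circinv A).
Local Notation one := (@sb_one A).
Local Notation lam := (@lambda A).
Let GA := sb_add_group A.
Let GC := sb_circ_group A.
Definition aA := g_A _ _ _ GA.
Definition aidl := g_idl _ _ _ GA.
Definition aidr := g_idr _ _ _ GA.
Definition ainvl := g_invl _ _ _ GA.
Definition ainvr := g_invr _ _ _ GA.
Definition aKl := g_Kl _ _ _ GA.
Definition aKr := g_Kr _ _ _ GA.
Definition aKl' := g_Kl' _ _ _ GA.
Definition aKr' := g_Kr' _ _ _ GA.
Definition ainv_uniq := g_inv_uniq _ _ _ GA.
Definition ainvK := g_invK _ _ _ GA.
Definition ainv_op := g_inv_op _ _ _ GA.
Definition ainv_e := g_inv_e _ _ _ GA.
Definition cA := g_A _ _ _ GC.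
Definition cidl := g_idl _ _ _ GC.
Definition cidr := g_idr _ _ _ GC.
Definition cinvl := g_invl _ _ _ GC.
Definition cinvr := g_invr _ _ _ GC.
Definition cKr' := g_Kr' _ _ _ GC.
Definition cinv_op := g_inv_op _ _ _ GC.
Definition cinv_e := g_inv_e _ _ _ GC.
Definition compat := sb_compat A.

Lemma circ_lam a u : a ⊚ u = a ⊕ lam a u.
Proof. unfold lambda. rewrite aKr. reflexivity. Qed.
Lemma lam_add a b c : lam a (b ⊕ c) = lam a b ⊕ lam a c.
Proof. unfold lambda. rewrite compat. repeat rewrite aA. reflexivity. Qed.
Lemma lam_one a : lam a one = one.
Proof. unfold lambda. rewrite cidr, ainvl. reflexivity. Qed.
Lemma lam_inv a x : lam a (ai x) = ai (lam a x).
Proof. apply ainv_uniq. rewrite <- lam_add, ainvr, lam_one. reflexivity. Qed.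
Lemma lam_comp a b c : lam (a ⊚ b) c = lam a (lam b c).
Proof.
  unfold lambda at 3. rewrite lam_add, lam_inv. unfold lambda.
  rewrite ainv_op, ainvK, cA. repeat rewrite aA. rewrite aKl'. reflexivity.
Qed.
Lemma lam_1 x : lam one x = x.
Proof. unfold lambda. rewrite ainv_e, cidl, aidl. reflexivity. Qed.
Lemma lam_K a x : lam (ci a) (lam a x) = x.
Proof. rewrite <- lam_comp, cinvl, lam_1. reflexivity. Qed.
Lemma lam_K' a x : lam a (lam (ci a) x) = x.
Proof. rewrite <- lam_comp, cinvr, lam_1. reflexivity. Qed.
Lemma ai_lam x : ai x = lam x (ci x).
Proof. unfold lambda. rewrite cinvr, aidr. reflexivity. Qed.
Lemma add_circ x y : x ⊕ y = x ⊚ lam (ci x) y.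
Proof. rewrite circ_lam, lam_K'. reflexivity. Qed.

Section M.
Variable I : A -> Prop.
Hypothesis HI : ideal I.

Lemma id1 (J : A -> Prop) : ideal J -> J one.
Proof. intros h. apply h. Qed.
Lemma idcirc (J : A -> Prop) x y : ideal J -> J x -> J y -> J (x ⊚ y).
Proof. intros h. apply h. Qed.
Lemma idci (J : A -> Prop) x : ideal J -> J x -> J (ci x).
Proof. intros h. apply h. Qed.
Lemma idconj (J : A -> Prop) a x : ideal J -> J x -> J (a ⊚ x ⊚ ci a).
Proof. intros h. apply h. Qed.
Lemma idlam (J : A -> Prop) a x : ideal J -> J x -> J (lam a x).
Proof. intros h. apply h. Qed.
Lemma idaconj (J : A -> Prop) a x : ideal J -> J x -> J (ai a ⊕ (x ⊕ a)).
Proof.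
  intros h hx. destruct h as [_ [h _]]. destruct (h a) as [h1 _].
  destruct (h1 x hx) as [i' [hi' e]]. rewrite e, aKl. exact hi'.
Qed.

Definition Q (x : A) : Prop :=
  forall i, I i -> i ⊕ x = x ⊕ i /\ i ⊚ x = x ⊚ i /\ i ⊕ x = i ⊚ x.

Lemma fwd (J : A -> Prop) : ideal J -> centralizes I J -> forall j, J j -> Q j.
Proof.
  intros hJ [phi [hadd [hcirc [h1 h2]]]] j hj i hi.
  assert (I1 : I one) by (apply id1; exact HI).
  assert (J1 : J one) by (apply id1; exact hJ).
  pose proof (hadd i one one j hi I1 J1 hj) as e1.
  pose proof (hadd one i j one I1 hi hj J1) as e2.
  pose proof (hcirc i one one j hi I1 J1 hj) as e3.
  pose proof (hcirc one i j one I1 hi hj J1) as e4.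
  rewrite aidr, aidl, h1, h2 in e1 by assumption.
  rewrite aidr, aidl, h1, h2 in e2 by assumption.
  rewrite cidr, cidl, h1, h2 in e3 by assumption.
  rewrite cidr, cidl, h1, h2 in e4 by assumption.
  split; [|split]; congruence.
Qed.

Lemma Q1 : Q one.
Proof. intros i _. rewrite aidr, aidl, cidr, cidl. auto. Qed.

Lemma Qcirc x y : Q x -> Q y -> Q (x ⊚ y).
Proof.
  intros hx hy i hi. destruct (hx i hi) as [x1 [x2 x3]]. destruct (hy i hi) as [y1 [y2 y3]].
  assert (xi : x ⊚ i = i ⊕ x) by congruence.
  assert (E1 : x ⊚ (i ⊕ y) = i ⊕ (x ⊚ y)).
  { rewrite compat, xi, aKl'. reflexivity. }
  assert (E2 : x ⊚ (y ⊕ i) = (x ⊚ y) ⊕ i).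
  { rewrite compat, xi, x1, <- aA, aKl. reflexivity. }
  split; [|split].
  - rewrite <- E1, <- E2, y1. reflexivity.
  - rewrite cA, x2, <- cA, y2, cA. reflexivity.
  - rewrite cA, x2, <- cA, <- y3, E1. reflexivity.
Qed.

Definition P (j : A) : Prop := exists J, ideal J /\ centralizes I J /\ J j.

Inductive Kn : nat -> A -> Prop :=
| Kn0 : Kn 0 one
| KnS n j r : P j -> Kn n r -> Kn (S n) (j ⊚ r).

Definition K x := exists n, Kn n x.

Lemma Kcirc n x : Kn n x -> forall m y, Kn m y -> Kn (n + m) (x ⊚ y).
Proof.
  induction 1; intros m y hy; simpl.
  - rewrite cidl. exact hy.
  - rewrite <- cA. constructor; auto.
Qed.

Lemma Ksingle j : P j -> K j.
Proof. intro h. exists 1. rewrite <- (cidr j). constructor; [exact h | constructor]. Qed.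

Lemma KcircK x y : K x -> K y -> K (x ⊚ y).
Proof. intros [n hn] [m hm]. exists (n + m). apply Kcirc; auto. Qed.

Lemma Pci j : P j -> P (ci j).
Proof. intros [J [h1 [h2 h3]]]. exists J. split; [|split]; auto. apply idci; auto. Qed.
Lemma Pconj a j : P j -> P (a ⊚ j ⊚ ci a).
Proof. intros [J [h1 [h2 h3]]]. exists J. split; [|split]; auto. apply idconj; auto. Qed.
Lemma Plam a j : P j -> P (lam a j).
Proof. intros [J [h1 [h2 h3]]]. exists J. split; [|split]; auto. apply idlam; auto. Qed.
Lemma Paconj a j : P j -> P (ai a ⊕ (j ⊕ a)).
Proof. intros [J [h1 [h2 h3]]]. exists J. split; [|split]; auto. apply idaconj; auto. Qed.

Lemma Kinv n x : Kn n x -> K (ci x).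
Proof.
  induction 1.
  - rewrite cinv_e. exists 0. constructor.
  - rewrite cinv_op. apply KcircK; auto. apply Ksingle, Pci; auto.
Qed.

Lemma Kconj n x : Kn n x -> forall a, K (a ⊚ x ⊚ ci a).
Proof.
  induction 1; intro a.
  - rewrite cidr, cinvr. exists 0. constructor.
  - assert (e : a ⊚ (j ⊚ r) ⊚ ci a = (a ⊚ j ⊚ ci a) ⊚ (a ⊚ r ⊚ ci a)).
    { repeat rewrite cA. rewrite cKr'. reflexivity. }
    rewrite e. apply KcircK; auto. apply Ksingle, Pconj; auto.
Qed.

Lemma Klam n x : Kn n x -> forall a, Kn n (lam a x).
Proof.
  induction 1; intro a.
  - rewrite lam_one. constructor.
  - rewrite circ_lam, lam_add, <- lam_comp, add_circ, <- lam_comp.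
    constructor; auto. apply Plam; auto.
Qed.

Lemma KlamK a x : K x -> K (lam a x).
Proof. intros [n h]. exists n. apply Klam; auto. Qed.

Lemma Kadd x y : K x -> K y -> K (x ⊕ y).
Proof. intros hx hy. rewrite add_circ. apply KcircK; auto. apply KlamK; auto. Qed.

Lemma Kaconj n : forall x, Kn n x -> forall a, K (ai a ⊕ (x ⊕ a)).
Proof.
  induction n; intros x hx a; inversion hx; subst.
  - rewrite aidl, ainvl. exists 0. constructor.
  - rewrite circ_lam.
    assert (e : ai a ⊕ (j ⊕ lam j r ⊕ a) = (ai a ⊕ (j ⊕ a)) ⊕ (ai a ⊕ (lam j r ⊕ a))).
    { repeat rewrite aA. rewrite aKl'. reflexivity. }
    rewrite e. apply Kadd.
    + apply Ksingle, Paconj; auto.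
    + apply IHn. apply Klam; auto.
Qed.

Lemma KQ n x : Kn n x -> Q x.
Proof.
  induction 1.
  - apply Q1.
  - apply Qcirc; auto. destruct H as [J [h1 [h2 h3]]]. apply (fwd J); auto.
Qed.

Lemma K_ideal : ideal K.
Proof.
  split; [|split].
  - split; [|split; [|split]].
    + exists 0. constructor.
    + apply KcircK.
    + intros x [n h]. apply (Kinv n); auto.
    + intros a x [n h]. apply (Kconj n); auto.
  - intro a. split.
    + intros i [n h]. exists (ai a ⊕ (i ⊕ a)). split.
      * apply (Kaconj n); auto.
      * rewrite aKr. reflexivity.
    + intros i [n h]. exists (a ⊕ (i ⊕ ai a)). split.
      * pose proof (Kaconj n i h (ai a)) as k. rewrite ainvK in k. exact k.
      * repeat rewrite aA. rewrite aKr'. reflexivity.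
  - intros a u hu. apply KlamK; auto.
Qed.

Lemma K_cent : centralizes I K.
Proof.
  exists (fun i j => i ⊕ j). split; [|split; [|split]].
  - intros i i' j j' hi hi' [n hj] hj'.
    destruct (KQ n j hj i' hi') as [e _].
    repeat rewrite aA. rewrite <- (aA i i' j), e, aA. reflexivity.
  - intros i i' j j' hi hi' hj hj'.
    assert (hjj : K (j ⊚ j')) by (apply KcircK; auto).
    destruct hjj as [n1 hjj]. destruct hj as [n2 hj]. destruct hj' as [n3 hj'].
    assert (hii : I (i ⊚ i')) by (apply idcirc; auto).
    destruct (KQ _ _ hjj _ hii) as [_ [_ e1]].
    destruct (KQ _ _ hj _ hi) as [_ [_ e2]].
    destruct (KQ _ _ hj _ hi') as [_ [e3 _]].
    destruct (KQ _ _ hj' _ hi') as [_ [_ e4]].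
    rewrite e1, e2, e4. repeat rewrite cA. rewrite <- (cA i i' j), e3, cA. reflexivity.
  - intros i _. apply aidr.
  - intros j _. apply aidl.
Qed.

Lemma K_max J : ideal J -> centralizes I J -> subset J K.
Proof. intros h1 h2 x hx. apply Ksingle. exists J. auto. Qed.
End M.
End B.

Theorem mainTheorem13 (A : skew_brace) (I : A -> Prop) (HI : ideal I) :
  exists C : A -> Prop,
    ideal C /\ centralizes I C /\
    (forall J : A -> Prop, ideal J -> centralizes I J -> subset J C).
Proof.
  exists (K A I). split; [|split].
  - apply K_ideal.
  - apply K_cent; auto.
  - apply K_max.
Qed.
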